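(* In the general setting of the context, for every $h\in\{0,1,\dots,L-1\}$, $$\mathbb{P}(P_h<P^* )\le\exp\Big(-\frac{\epsilon^2}{4\gamma}\Big)+m\exp\Big(-\frac{\epsilon^2}{6\gamma}\Big).$$
   Context: General setting. Let $m,k,n$ be positive integers and $b\in\mathbb{R}^m_{++}$. Let $\mathcal G$ be the set of proper, concave, upper semicontinuous functions $f:\mathbb{R}^k\to[-\infty,\infty)$ with bounded superlevel sets such that $\mathrm{dom} f\subset\mathbb{R}^k_+$ and $f(0)=0$. Let $f_1,\dots,f_n\in\mathcal G$ and $A_1,\dots,A_n\in\mathbb{R}_+^{m\times k}$. Let $P^*=\sup\{\sum_{t=1}^n f_t(x_t): x_t\in\mathbb{R}^k,\ \sum_{t=1}^n A_tx_t\le b\}$ and assume $P^*>0$. Let $\gamma>0$ satisfy, for every $t\in[n]$: $(A_tx)_i/b_i\le\gamma$ for all $i\in[m]$ and all $x$ with $f_t(x)\ge0$, and $f_t(x)\le\gamma P^*$ for all $x\in\mathrm{dom} f_t$. Let $\epsilon\in(0,1)$ be such that $L=\log_2(1/\epsilon)$ and $n\epsilon$ are integers. Let $\sigma$ be a uniformly random permutation of $[n]$; probabilities are over $\sigma$. For $h\in\{0,\dots,L-1\}$ let $\theta_h=2^{-(h+1)/2}\epsilon^{1/2}$ and $$P_h=\sup\Big\{\tfrac{1}{2^h\epsilon(1-\theta_h)}\sum_{t=1}^{2^hn\epsilon}f_{\sigma(t)}(x_t)\ :\ x_t\in\mathbb{R}^k,\ \tfrac{1}{2^h\epsilon(1+\theta_h)}\sum_{t=1}^{2^hn\epsilon}A_{\sigma(t)}x_t\le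 b\Big\}.$$ *)

(* Defs.v *)
From mathcomp Require Import all_boot fingroup perm.
From Stdlib Require Import Reals ClassicalEpsilon.

Set Implicit Arguments.
Unset Strict Implicit.
Unset Printing Implicit Defensive.

Open Scope R_scope.

Definition pbool (P : Prop) : bool :=
  if excluded_middle_informative P then true else false.

Definition Vec (k : nat) := 'I_k -> R.
Definition Mat (m k : nat) := 'I_m -> 'I_k -> R.

Notation "\rsum_ ( i < n | P ) F" := (\big[Rplus/R0]_(i < n | P%B) F%R)
  (at level 41, F at level 41, i, n at level 50) : R_scope.
Notation "\rsum_ ( i < n ) F" := (\big[Rplus/R0]_(i < n) F%R)
  (at level 41, F at level 41, i, n at level 50) : R_scope.

Definition mv (m k : nat) (A : Mat m k) (x : Vec k) (i : 'I_m) : R :=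
  \rsum_(j < k) (A i j * x j).

Definition closed_set (k : nat) (S : Vec k -> Prop) : Prop :=
  forall x : Vec k,
    (forall eps, 0 < eps -> exists y, S y /\ forall j, Rabs (y j - x j) < eps) ->
    S x.

Definition bounded_set (k : nat) (S : Vec k -> Prop) : Prop :=
  exists M : R, forall x, S x -> forall j, Rabs (x j) <= M.

(* An extended-valued function f : R^k -> [-oo, oo) is represented by its
   effective domain [dom] (the set where f > -oo) together with its
   (real) values [f] on [dom]; outside [dom] the function equals -oo and
   the values of [f] there are irrelevant. *)

Definition concave_ext (k : nat) (dom : Vec k -> Prop) (f : Vec k -> R) : Prop :=
  forall x y : Vec k, dom x -> dom y -> forall l, 0 <= l <= 1 ->
    let z := fun j => l * x j + (1 - l) * y j in
    dom z /\ l * f x + (1 - l) * f y <= f z.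

Definition superlevel (k : nat) (dom : Vec k -> Prop) (f : Vec k -> R) (a : R)
  : Vec k -> Prop := fun x => dom x /\ a <= f x.

Definition in_G (k : nat) (dom : Vec k -> Prop) (f : Vec k -> R) : Prop :=
  (* proper (never +oo by construction; not identically -oo) *)
  (exists x, dom x) /\
  concave_ext dom f /\
  (* upper semicontinuous: all superlevel sets closed *)
  (forall a, closed_set (superlevel dom f a)) /\
  (forall a, bounded_set (superlevel dom f a)) /\
  (forall x, dom x -> forall j, 0 <= x j) /\
  dom (fun _ => 0) /\ f (fun _ => 0) = 0.

Definition offline_values (m k n : nat) (dom : 'I_n -> Vec k -> Prop)
  (f : 'I_n -> Vec k -> R) (A : 'I_n -> Mat m k) (b : 'I_m -> R) : R -> Prop :=
  fun v => exists x : 'I_n -> Vec k,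
    (forall t, dom t (x t)) /\
    (forall i, \rsum_(t < n) mv (A t) (x t) i <= b i) /\
    v = \rsum_(t < n) f t (x t).

Definition theta (eps : R) (h : nat) : R := sqrt (eps / 2 ^ (h + 1)).

(* Set of objective values of feasible points of the sampled problem P_h
   (for the permutation sigma); the sample is the first T = 2^h n eps
   positions t = 0, ..., T-1 (0-based) of sigma. *)
Definition sample_values (m k n : nat) (dom : 'I_n -> Vec k -> Prop)
  (f : 'I_n -> Vec k -> R) (A : 'I_n -> Mat m k) (b : 'I_m -> R)
  (eps : R) (h : nat) (sigma : 'S_n) : R -> Prop :=
  fun v => exists x : 'I_n -> Vec k,
    let T := 2 ^ h * INR n * eps in
    (forall t : 'I_n, INR t < T -> dom (sigma t) (x t)) /\
    (forall i, / (2 ^ h * eps * (1 + theta eps h)) *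
         (\rsum_(t < n | pbool (INR t < T)) mv (A (sigma t)) (x t) i) <= b i) /\
    v = / (2 ^ h * eps * (1 - theta eps h)) *
         (\rsum_(t < n | pbool (INR t < T)) f (sigma t) (x t)).

(* sup S < c  (sup taken in the extended reals) *)
Definition sup_lt (S : R -> Prop) (c : R) : Prop :=
  exists c', c' < c /\ forall v, S v -> v <= c'.

Definition prob_perm (n : nat) (E : 'S_n -> Prop) : R :=
  INR #|[set s : 'S_n | pbool (E s)]| / INR #|[set: 'S_n]|.

(* Main.v *)
From HB Require Import structures.
Require Import Defs.
From mathcomp Require Import all_boot fingroup perm.
From Stdlib Require Import Reals Lra Lia Psatz ClassicalEpsilon Classical.
From Coquelicot Require Import Coquelicot.
Open Scope R_scope.


Lemma mono0 (g dg : R -> R) (x : R) : 0 <= x ->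
  (forall y, is_derive g y (dg y)) -> (forall y, 0 <= y -> 0 <= dg y) -> g 0 <= g x.
Proof.
intros Hx Hd Hp.
destruct (Req_dec x 0) as [->|Hx0]; [lra|].
destruct (MVT_gen g 0 x dg) as [c [Hc Heq]].
- intros; apply Hd.
- intros y _. apply continuity_pt_filterlim. apply (@ex_derive_continuous R_AbsRing R_NormedModule). eexists; apply Hd.
- assert (H1 : Rmin 0 x = 0) by (apply Rmin_left; lra). assert (H2 : Rmax 0 x = x) by (apply Rmax_right; lra).
  rewrite H1 H2 in Hc.
  assert (0 <= dg c * (x - 0)) by (apply Rmult_le_pos; [apply Hp|]; lra). lra.
Qed.

Lemma E3 (t : R) : 0 <= t -> exp (- t) <= 1 - t + t^2/2.
Proof.
intros Ht.
assert (H := mono0 (fun y => 1 - y + y^2/2 - exp (-y)) (fun y => -1 + y + exp (-y)) t Ht).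
simpl in H. rewrite Ropp_0 exp_0 in H.
assert (0 <= 1 - t + t * (t * 1) / 2 - exp (- t)); [|simpl; lra].
refine (Rle_trans _ _ _ _ (H _ _)).
- lra.
- intros y. auto_derive; [easy|]. simpl. lra.
- intros y _. generalize (exp_ineq1_le (-y)); lra.
Qed.

Lemma E3' (t : R) : 0 <= t -> 1 - t + t^2/2 - t^3/6 <= exp (- t).
Proof.
intros Ht.
assert (H := mono0 (fun y => exp (-y) - (1 - y + y^2/2 - y^3/6)) (fun y => - exp (-y) + 1 - y + y^2/2) t Ht).
simpl in H. rewrite Ropp_0 exp_0 in H.
assert (0 <= exp (-t) - (1 - t + t*(t*1)/2 - t*(t*(t*1))/6)); [|simpl; lra].
refine (Rle_trans _ _ _ _ (H _ _)).
- lra.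
- intros y. auto_derive; [easy|]. simpl. lra.
- intros y Hy. generalize (E3 y Hy). simpl. lra.
Qed.

Lemma E4 (t : R) : 0 <= t <= 1/2 -> exp t <= 1 + t + 2/3 * t^2.
Proof.
intros Ht.
assert (H := E3' t (proj1 Ht)).
assert (Hq : 0 < 1 - t + t^2/2 - t^3/6) by nra.
assert (Hm : exp t * exp (-t) = 1) by (rewrite <- exp_plus; replace (t + - t) with 0 by ring; apply exp_0).
assert (Hp : (1 + t + 2/3 * t^2) * (1 - t + t^2/2 - t^3/6) >= 1).
{ assert (E : (1 + t + 2/3 * t^2) * (1 - t + t^2/2 - t^3/6) - 1 = t^2 * ((1-t)^2/6 - t^3/9)) by field.
  assert (0 <= t^2 * ((1-t)^2/6 - t^3/9)); [|lra].
  apply Rmult_le_pos; [nra|]. nra. }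
assert (He : 0 < exp t) by apply exp_pos.
nra.
Qed.


Lemma RplusA : associative Rplus. Proof. by move=> *; rewrite Rplus_assoc. Qed.
Lemma RmultA : associative Rmult. Proof. by move=> *; rewrite Rmult_assoc. Qed.
HB.instance Definition _ := Monoid.isComLaw.Build R R0 Rplus RplusA Rplus_comm Rplus_0_l.
HB.instance Definition _ := Monoid.isComLaw.Build R R1 Rmult RmultA Rmult_comm Rmult_1_l.

Lemma sumR_le (I : finType) (P : pred I) (F G : I -> R) :
  (forall i, P i -> F i <= G i) ->
  \big[Rplus/R0]_(i | P i) F i <= \big[Rplus/R0]_(i | P i) G i.
Proof.
move=> H. apply: (big_ind2 (fun a b => a <= b)) => //.
- by apply Rle_refl.
- by move=> *; apply Rplus_le_compat.
Qed.

Lemma sumR_ge0 (I : finType) (P : pred I) (F : I -> R) :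
  (forall i, P i -> 0 <= F i) -> 0 <= \big[Rplus/R0]_(i | P i) F i.
Proof.
move=> H. apply: (big_ind (fun a => 0 <= a)) => //.
- by apply Rle_refl.
- by move=> *; apply Rplus_le_le_0_compat.
Qed.

Lemma prodR_ge0 (I : finType) (P : pred I) (F : I -> R) :
  (forall i, P i -> 0 <= F i) -> 0 <= \big[Rmult/R1]_(i | P i) F i.
Proof.
move=> H. apply: (big_ind (fun a => 0 <= a)) => //.
- by apply Rle_0_1.
- by move=> *; apply Rmult_le_pos.
Qed.

Lemma sumR_mulr (I : finType) (P : pred I) (F : I -> R) a :
  \big[Rplus/R0]_(i | P i) F i * a = \big[Rplus/R0]_(i | P i) (F i * a).
Proof.
apply: (big_morph (fun x => x * a)).
- by move=> x y; rewrite Rmult_plus_distr_r.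
- by rewrite Rmult_0_l.
Qed.

Lemma sumR_mull (I : finType) (P : pred I) (F : I -> R) a :
  a * \big[Rplus/R0]_(i | P i) F i = \big[Rplus/R0]_(i | P i) (a * F i).
Proof.
apply: (big_morph (fun x => a * x)).
- by move=> x y; rewrite Rmult_plus_distr_l.
- by rewrite Rmult_0_r.
Qed.

Lemma sumR_const_ord (n : nat) (c : R) : \big[Rplus/R0]_(i < n) c = INR n * c.
Proof.
elim: n => [|n IH]; first by rewrite big_ord0 /=; ring.
rewrite big_ord_recr IH S_INR; simpl; ring.
Qed.

Lemma sumR_split (I : finType) (P : pred I) (F G : I -> R) :
  \big[Rplus/R0]_(i | P i) (F i + G i) =
  \big[Rplus/R0]_(i | P i) F i + \big[Rplus/R0]_(i | P i) G i.
Proof. by rewrite big_split. Qed.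

Section Comb.
Variable n : nat.
Variable y : 'I_n -> R.
Hypothesis y_ge0 : forall i, 0 <= y i.

Definition Pp (s : nat) (sg : 'S_n) : R := \big[Rmult/R1]_(t : 'I_n | (t < s)%nat) y (sg t).
Definition SP s := \big[Rplus/R0]_(sg : 'S_n) Pp s sg.
Definition Ysum := \big[Rplus/R0]_(i < n) y i.

Lemma Pp_ge0 s sg : 0 <= Pp s sg.
Proof. by apply prodR_ge0 => i _; apply y_ge0. Qed.

Lemma sum_reindex (tau : 'S_n) (F : 'S_n -> R) :
  \big[Rplus/R0]_(sg : 'S_n) F sg = \big[Rplus/R0]_(sg : 'S_n) F (tau * sg)%g.
Proof. by apply: (reindex_inj (mulgI tau)). Qed.

Lemma Pp_S (s : 'I_n) sg : Pp s.+1 sg = Pp s sg * y (sg s).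
Proof.
rewrite /Pp (bigD1 s) /=; last by rewrite ltnS leqnn.
rewrite Rmult_comm; congr (_ * _).
apply: eq_bigl => t; rewrite ltnS.
by rewrite [(t < s)%nat]ltn_neqAle andbC -(inj_eq val_inj).
Qed.

Lemma Pp_invar s (tau : 'S_n) sg : (forall u : 'I_n, (u < s)%nat -> tau u = u) ->
  Pp s (tau * sg)%g = Pp s sg.
Proof.
move=> H; apply: eq_bigr => u Hu. by rewrite permM H.
Qed.

Definition Tt (s : nat) (t : 'I_n) := \big[Rplus/R0]_(sg : 'S_n) (Pp s sg * y (sg t)).

Lemma sum_Tt s : \big[Rplus/R0]_(t < n) Tt s t = Ysum * SP s.
Proof.
rewrite /Tt exchange_big /= /SP sumR_mull.
apply: eq_bigr => sg _.
rewrite -sumR_mull Rmult_comm; congr (_ * _).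
rewrite /Ysum. symmetry. exact: (reindex_inj (@perm_inj _ sg)).
Qed.

Lemma Tt_hi (s : 'I_n) (t : 'I_n) : (s <= t)%nat -> Tt s t = Tt s s.
Proof.
move=> Hst.
rewrite /Tt (sum_reindex (tperm s t)).
apply: eq_bigr => sg _.
rewrite Pp_invar.
- by rewrite permM tpermR.
- move=> u Hu. apply: tpermD.
  + apply/eqP => E. move: Hu; rewrite -E ltnn //.
  + apply/eqP => E. move: Hu; rewrite -E => Hu. have := leq_trans Hu Hst. by rewrite ltnn.
Qed.

Lemma Tt_lo (s : 'I_n) (t : 'I_n) : (t < s)%nat -> Tt s s <= Tt s t.
Proof.
move=> Hts.
set Rr := fun sg : 'S_n => \big[Rmult/R1]_(u : 'I_n | (u < s)%nat && (u != t)) y (sg u).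
have HP : forall sg, Pp s sg = y (sg t) * Rr sg.
  by move=> sg; rewrite /Pp (bigD1 t).
have HR : forall sg, Rr (tperm t s * sg)%g = Rr sg.
  move=> sg; apply: eq_bigr => u /andP [Hu Hut].
  rewrite permM tpermD //.
  - by rewrite eq_sym.
  - apply/eqP => E; move: Hu; rewrite E ltnn //.
have HRge : forall sg, 0 <= Rr sg by move=> sg; apply prodR_ge0 => i _; apply y_ge0.
have E1 : Tt s t = \big[Rplus/R0]_(sg : 'S_n) (Rr sg * y (sg t) ^ 2).
  by apply: eq_bigr => sg _; rewrite HP /=; ring.
have E2 : Tt s t = \big[Rplus/R0]_(sg : 'S_n) (Rr sg * y (sg s) ^ 2).
  rewrite E1 (sum_reindex (tperm t s)).
  by apply: eq_bigr => sg _; rewrite HR permM tpermL.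
have E3 : Tt s s = \big[Rplus/R0]_(sg : 'S_n) (Rr sg * (y (sg t) * y (sg s))).
  by apply: eq_bigr => sg _; rewrite HP /=; ring.
have : Tt s s + Tt s s <= Tt s t + Tt s t.
  rewrite {1}E1 {1}E2 E3 -!sumR_split.
  apply sumR_le => sg _.
  have := HRge sg. have : 0 <= (y (sg t) - y (sg s)) ^ 2 by apply pow2_ge_0.
  nra.
lra.
Qed.

Lemma SP_step (s : 'I_n) : (0 < n)%nat -> SP s.+1 <= Ysum / INR n * SP s.
Proof.
move=> Hn.
have Hn' : 0 < INR n by apply lt_0_INR; apply/ltP.
have ESP : SP s.+1 = Tt s s by apply: eq_bigr => sg _; rewrite Pp_S.
have Hsum : INR n * Tt s s <= Ysum * SP s.
  rewrite -sum_Tt -sumR_const_ord.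
  apply sumR_le => t _.
  case: (leqP s t) => H.
  - by rewrite Tt_hi //; apply Rle_refl.
  - by apply Tt_lo.
rewrite ESP.
apply (Rmult_le_reg_l (INR n)) => //.
replace (INR n * (Ysum / INR n * SP s)) with (Ysum * SP s) by (field; lra).
exact Hsum.
Qed.

Lemma SP_bound (s : nat) : (0 < n)%nat -> (s <= n)%nat ->
  SP s <= (Ysum / INR n) ^ s * \big[Rplus/R0]_(sg : 'S_n) R1.
Proof.
move=> Hn. elim: s => [|s IH] Hs.
- rewrite /= Rmult_1_l. apply Req_le. apply: eq_bigr => sg _.
  by rewrite /Pp big_pred0.
- have Hs' : (s < n)%nat by [].
  have Hn' : 0 < INR n by apply lt_0_INR; apply/ltP.
  have := SP_step (Ordinal Hs') Hn. rewrite /= => H.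
  apply: (Rle_trans _ _ _ H).
  have HY : 0 <= Ysum / INR n.
    apply Rmult_le_pos; last by apply Rlt_le, Rinv_0_lt_compat.
    by apply sumR_ge0 => i _; apply y_ge0.
  rewrite Rmult_assoc. apply Rmult_le_compat_l => //.
  apply IH. by apply ltnW.
Qed.

End Comb.

Lemma exp_pow_nat (x : R) (s : nat) : exp x ^ s = exp (INR s * x).
Proof.
elim: s => [|s IH]; first by rewrite /= Rmult_0_l exp_0.
rewrite S_INR; change (exp x ^ s.+1) with (exp x * exp x ^ s); rewrite IH -exp_plus; congr exp; ring.
Qed.

Lemma exp_le_mono x y : x <= y -> exp x <= exp y.
Proof. case/Rle_lt_or_eq_dec => [H|->]; [apply Rlt_le, exp_increasing, H|apply Rle_refl]. Qed.

Lemma E1' (x : R) : 1 + x <= exp x.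
Proof. exact: exp_ineq1_le. Qed.

Lemma E2 (l c : R) : 0 <= c <= 1 -> exp (l * c) <= 1 + c * (exp l - 1).
Proof.
move=> Hc.
set u := l * c.
have H1 : exp l >= exp u * (1 + (l - u)).
{ have -> : l = u + (l - u) by ring. rewrite exp_plus.
  have := exp_ineq1_le (l-u). have := exp_pos u.
  have -> : u + (l - u) - u = l - u by ring. nra. }
have H2 : 1 >= exp u * (1 - u).
{ have : exp u * exp (-u) = 1 by rewrite -exp_plus Rplus_opp_r exp_0.
  have := exp_ineq1_le (-u). have := exp_pos u. nra. }
have : exp u = c * (exp u * (1 + (l - u))) + (1-c) * (exp u * (1 - u)) by rewrite /u; ring.
nra.
Qed.

Definition ind (T : finType) (E : T -> Prop) (x : T) : R := if pbool (E x) then 1 else 0.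
Arguments ind {T}.

Lemma card_ind (T : finType) (E : T -> Prop) :
  INR #|[set x : T | pbool (E x)]| = \big[Rplus/R0]_(x : T) ind E x.
Proof.
rewrite -sum1_card.
rewrite (big_morph INR plus_INR (erefl (INR 0))).
rewrite big_mkcond /=. apply: eq_bigr => x _.
by rewrite /ind inE; case: (pbool (E x)).
Qed.

Lemma card_all (T : finType) : INR #|[set: T]| = \big[Rplus/R0]_(x : T) 1.
Proof.
rewrite cardsT -sum1_card.
by rewrite (big_morph INR plus_INR (erefl (INR 0))).
Qed.

Lemma ind_ge0 (T : finType) (E : T -> Prop) x : 0 <= ind E x.
Proof. rewrite /ind; case: pbool; lra. Qed.

Lemma pboolP (P : Prop) : pbool P = true <-> P.
Proof. rewrite /pbool; case: ClassicalEpsilon.excluded_middle_informative => //. Qed.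

Lemma markov (T : finType) (E : T -> Prop) (g : T -> R) (K : R) :
  (forall x, 0 <= g x) -> (forall x, E x -> K <= g x) ->
  INR #|[set x : T | pbool (E x)]| * K <= \big[Rplus/R0]_(x : T) g x.
Proof.
move=> Hg HK. rewrite card_ind sumR_mulr. apply sumR_le => x _.
rewrite /ind. case E1: (pbool (E x)).
- rewrite Rmult_1_l. apply HK. by apply/pboolP.
- rewrite Rmult_0_l. apply Hg.
Qed.

Arguments markov {T}.
Section Tail.
Variable n : nat.
Hypothesis Hn : (0 < n)%nat.
Variable s : nat.
Hypothesis Hs : (s <= n)%nat.
Variable c : 'I_n -> R.
Hypothesis Hc : forall i, 0 <= c i <= 1.

Definition X (sg : 'S_n) := \big[Rplus/R0]_(t : 'I_n | (t < s)%nat) c (sg t).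
Definition Csum := \big[Rplus/R0]_(i < n) c i.
Definition Zs := \big[Rplus/R0]_(sg : 'S_n) (1:R).

Lemma mgf (l : R) :
  \big[Rplus/R0]_(sg : 'S_n) exp (l * X sg) <=
  exp ((exp l - 1) * (Csum / INR n * INR s)) * Zs.
Proof.
have Hn' : 0 < INR n by apply lt_0_INR; apply/ltP.
have E : forall sg, exp (l * X sg) = Pp n (fun i => exp (l * c i)) s sg.
  move=> sg. rewrite /X sumR_mull.
  by rewrite (big_morph exp exp_plus exp_0).
under eq_bigr => sg _ do rewrite E.
have Hy : forall i, 0 <= exp (l * c i) by move=> i; apply Rlt_le, exp_pos.
apply: (Rle_trans _ _ _ (@SP_bound n (fun i => exp (l * c i)) Hy s Hn Hs)).
apply Rmult_le_compat_r; first by apply sumR_ge0 => *; lra.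
have -> : (exp l - 1) * (Csum / INR n * INR s) = INR s * ((exp l - 1) * (Csum / INR n)) by ring.
rewrite -exp_pow_nat. apply pow_incr. split.
- apply Rmult_le_pos; last by apply Rlt_le, Rinv_0_lt_compat.
  by apply sumR_ge0 => i _; apply Rlt_le, exp_pos.
- apply: Rle_trans; last apply exp_ineq1_le.
  rewrite /Ysum.
  have H : \big[Rplus/R0]_(i < n) exp (l * c i) <= \big[Rplus/R0]_(i < n) (1 + c i * (exp l - 1)).
    by apply sumR_le => i _; apply E2.
  rewrite sumR_split sumR_const_ord -sumR_mulr -/Csum in H.
  apply (Rmult_le_reg_l (INR n)) => //.
  have -> : INR n * (\big[Rplus/R0]_(i < n) exp (l * c i) / INR n) = \big[Rplus/R0]_(i < n) exp (l * c i) by field; lra.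
  have -> : INR n * (1 + (exp l - 1) * (Csum / INR n)) = INR n * 1 + Csum * (exp l - 1) by field; lra.
  exact H.
Qed.

Lemma M_ge0 : 0 <= Csum / INR n * INR s.
Proof.
have Hn' : 0 < INR n by apply lt_0_INR; apply/ltP.
apply Rmult_le_pos; [apply Rmult_le_pos|apply pos_INR].
- by apply sumR_ge0 => i _; case: (Hc i).
- by apply Rlt_le, Rinv_0_lt_compat.
Qed.

Lemma Zs_ge0 : 0 <= Zs.
Proof. apply sumR_ge0 => *; lra. Qed.

Lemma lower_tail (th : R) : 0 <= th ->
  INR #|[set sg : 'S_n | pbool (X sg < (1 - th) * (Csum / INR n * INR s))]|
  <= exp (- (th ^ 2 * (Csum / INR n * INR s) / 2)) * Zs.
Proof.
move=> Hth. set M := Csum / INR n * INR s.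
have HM : 0 <= M by apply M_ge0.
have Hm := markov (fun sg => X sg < (1 - th) * M) (fun sg => exp (- th * X sg))
   (exp (- th * ((1 - th) * M))) (fun x => Rlt_le _ _ (exp_pos _)).
have Hm2 : INR #|[set sg : 'S_n | pbool (X sg < (1 - th) * M)]| * exp (- th * ((1 - th) * M))
   <= exp ((exp (- th) - 1) * M) * Zs.
  apply: Rle_trans; last by apply mgf.
  apply Hm => sg Hsg. apply exp_le_mono. nra.
have HK := exp_pos (- th * ((1 - th) * M)).
have HE3 := E3 th Hth.
have Hexp : exp ((exp (- th) - 1) * M) <= exp (- (th ^ 2 * M / 2)) * exp (- th * ((1 - th) * M)).
  rewrite -exp_plus. apply exp_le_mono. nra.
have HZ := Zs_ge0.
set C := INR _ in Hm2 *.
apply (Rmult_le_reg_r (exp (- th * ((1 - th) * M)))) => //.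
apply: (Rle_trans _ _ _ Hm2).
have -> : exp (- (th ^ 2 * M / 2)) * Zs * exp (- th * ((1 - th) * M)) =
   (exp (- (th ^ 2 * M / 2)) * exp (- th * ((1 - th) * M))) * Zs by ring.
by apply Rmult_le_compat_r.
Qed.

Lemma upper_tail (th MH : R) : 0 <= th <= 1/2 -> Csum / INR n * INR s <= MH ->
  INR #|[set sg : 'S_n | pbool ((1 + th) * MH < X sg)]|
  <= exp (- (th ^ 2 * MH / 3)) * Zs.
Proof.
move=> Hth HMH. set M := Csum / INR n * INR s in HMH *.
have HM : 0 <= M by apply M_ge0.
have Hm := markov (fun sg => (1 + th) * MH < X sg) (fun sg => exp (th * X sg))
   (exp (th * ((1 + th) * MH))) (fun x => Rlt_le _ _ (exp_pos _)).
have Hm2 : INR #|[set sg : 'S_n | pbool ((1 + th) * MH < X sg)]| * exp (th * ((1 + th) * MH))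
   <= exp ((exp th - 1) * M) * Zs.
  apply: Rle_trans; last by apply mgf.
  apply Hm => sg Hsg. apply exp_le_mono. nra.
have HK := exp_pos (th * ((1 + th) * MH)).
have HE4 := E4 th Hth.
have Hth1 : 1 <= exp th by have := exp_ineq1_le th; lra.
have Hexp : exp ((exp th - 1) * M) <= exp (- (th ^ 2 * MH / 3)) * exp (th * ((1 + th) * MH)).
  rewrite -exp_plus. apply exp_le_mono.
  have : (exp th - 1) * M <= (exp th - 1) * MH by apply Rmult_le_compat_l; lra.
  have : (exp th - 1) * MH <= (th + 2/3 * th^2) * MH by apply Rmult_le_compat_r; lra.
  nra.
have HZ := Zs_ge0.
apply (Rmult_le_reg_r (exp (th * ((1 + th) * MH)))) => //.
apply: (Rle_trans _ _ _ Hm2).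
have -> : exp (- (th ^ 2 * MH / 3)) * Zs * exp (th * ((1 + th) * MH)) =
   (exp (- (th ^ 2 * MH / 3)) * exp (th * ((1 + th) * MH))) * Zs by ring.
by apply Rmult_le_compat_r.
Qed.
End Tail.


Lemma fin_max (T : finType) (E : T -> Prop) (S : T -> R -> Prop) (P : R) :
  (forall x, E x -> exists c, c < P /\ forall v, S x v -> v <= c) ->
  exists V0, V0 < P /\ forall x, E x -> forall v, S x v -> v <= V0.
Proof.
move=> H.
suff: forall l : seq T, exists V0, V0 < P /\
    forall x, x \in l -> E x -> forall v, S x v -> v <= V0.
  case/(_ (enum T)) => V0 [HV H']; exists V0; split => // x Ex.
  by apply: H' => //; rewrite mem_enum.
elim => [|a l [V0 [HV IH]]].
- exists (P - 1); split; [lra|] => x; by rewrite in_nil.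
- case: (classic (E a)) => Ea.
  + case: (H a Ea) => c [Hc Hcv].
    exists (Rmax V0 c); split; first by apply Rmax_lub_lt.
    move=> x; rewrite in_cons => /orP [/eqP -> | Hx] Ex v Sv.
    * exact: Rle_trans (Hcv v Sv) (Rmax_r _ _).
    * exact: Rle_trans (IH x Hx Ex v Sv) (Rmax_l _ _).
  + exists V0; split => // x; rewrite in_cons => /orP [/eqP -> | Hx] Ex v Sv.
    * by case: (Ea Ex).
    * exact: IH x Hx Ex v Sv.
Qed.

Lemma pbool_INR_lt a b : pbool (INR a < INR b) = (a < b)%nat.
Proof.
rewrite /pbool; case: excluded_middle_informative => H; symmetry.
- apply/ltP; apply INR_lt; exact H.
- apply/negbTE/negP => /ltP H'; apply H; apply lt_INR; exact H'.
Qed.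

Lemma mv_zero m k (A : Mat m k) i : mv A (fun _ => 0) i = 0.
Proof. rewrite /mv; apply: big1 => j _; ring. Qed.

Lemma mv_ge0 m k (A : Mat m k) (x : Vec k) i :
  (forall j, 0 <= A i j) -> (forall j, 0 <= x j) -> 0 <= mv A x i.
Proof. move=> HA Hx; rewrite /mv; apply sumR_ge0 => j _; apply Rmult_le_pos; auto. Qed.

Lemma sumR_ge_term (I : finType) (F : I -> R) i :
  (forall j, 0 <= F j) -> F i <= \big[Rplus/R0]_j F j.
Proof.
move=> H. rewrite (bigD1 i) //=.
have Hs : 0 <= \big[Rplus/R0]_(j | j != i) F j by apply sumR_ge0.
rewrite -{1}[F i]Rplus_0_r. by apply Rplus_le_compat_l.
Qed.

Lemma exchR (I J : finType) (F : I -> J -> R) :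
  \big[Rplus/R0]_(i : I) \big[Rplus/R0]_(j : J) F i j = \big[Rplus/R0]_(j : J) \big[Rplus/R0]_(i : I) F i j.
Proof. exact: exchange_big. Qed.

Lemma ptwise a b S : 0 <= b -> 0 <= S -> (a = 0 \/ (a = 1 /\ (b = 1 \/ 1 <= S))) -> a <= b + S.
Proof. move=> Hb HS [->|[-> [->|H]]]; lra. Qed.

Lemma union_count (m : nat) (T : finType) (E F0 : T -> Prop) (F : 'I_m -> T -> Prop) :
  (forall x, E x -> F0 x \/ exists i, F i x) ->
  INR #|[set x | pbool (E x)]| <= INR #|[set x | pbool (F0 x)]|
     + \big[Rplus/R0]_(i < m) INR #|[set x | pbool (F i x)]|.
Proof.
move=> H. rewrite !card_ind.
under [X in _ <= _ + X]eq_bigr => i _ do rewrite card_ind.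
rewrite (@exchR _ _ (fun i x => ind (F i) x)) -sumR_split.
apply sumR_le => x _.
apply ptwise; [apply ind_ge0 | by apply sumR_ge0 => i _; apply ind_ge0 |].
case HE: (pbool (E x)).
- right; split; first by rewrite /ind HE.
  case: (H x (proj1 (pboolP _) HE)) => [HF0 | [i Hi]].
  + left. have E1 : pbool (F0 x) = true by apply/pboolP.
    by rewrite /ind E1.
  + right. have E1 : pbool (F i x) = true by apply/pboolP.
    have <- : ind (F i) x = 1 by rewrite /ind E1.
    apply: (@sumR_ge_term _ (fun j => ind (F j) x)) => j. apply ind_ge0.
- left. by rewrite /ind HE.
Qed.

Lemma G_nonneg k (dom : Vec k -> Prop) f : in_G dom f -> forall x, dom x -> forall j, 0 <= x j.
Proof. by case=> [_ [_ [_ [_ [H _]]]]]. Qed.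
Lemma G_dom0 k (dom : Vec k -> Prop) f : in_G dom f -> dom (fun _ => 0).
Proof. by case=> [_ [_ [_ [_ [_ [H _]]]]]]. Qed.
Lemma G_f0 k (dom : Vec k -> Prop) f : in_G dom f -> f (fun _ => 0) = 0.
Proof. by case=> [_ [_ [_ [_ [_ [_ H]]]]]]. Qed.

Arguments G_nonneg {k dom f}.
Arguments G_dom0 {k dom f}.
Arguments G_f0 {k dom f}.

Section MainSec.
Variables (m k n : nat).
Hypothesis Hn : (0 < n)%nat.
Variable b : 'I_m -> R.
Hypothesis Hb : forall i, 0 < b i.
Variables (dom : 'I_n -> Vec k -> Prop) (f : 'I_n -> Vec k -> R).
Hypothesis HG : forall t, in_G (dom t) (f t).
Variable A : 'I_n -> Mat m k.
Hypothesis HA : forall t i j, 0 <= A t i j.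
Variable Pstar : R.
Hypothesis HPstar : is_lub (offline_values dom f A b) Pstar.
Hypothesis HPpos : 0 < Pstar.
Variable gamma : R.
Hypothesis Hgamma : 0 < gamma.
Hypothesis Hgamma1 : forall t x, dom t x -> 0 <= f t x ->
               forall i, mv (A t) x i / b i <= gamma.
Hypothesis Hgamma2 : forall t x, dom t x -> f t x <= gamma * Pstar.
Variable eps : R.
Hypothesis Heps : 0 < eps < 1.
Variables (L h : nat).
Hypothesis HL : eps = / 2 ^ L.
Hypothesis Hh : (h < L)%nat.
Variable s : nat.
Hypothesis Hs : INR s = 2 ^ h * INR n * eps.

Lemma arith :
  let p := 2 ^ h * eps in
  let th := theta eps h in
  [/\ 0 < p, p <= 1/2, 0 <= th, th <= 1/2 & th ^ 2 * p = eps ^ 2 / 2].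
Proof.
move=> p th.
have Hh' : (h < L)%coq_nat by apply/ltP.
have [r Hr] : exists r, L = (S h + r)%coq_nat by exists (L - S h)%coq_nat; lia.
have H2h : 1 <= 2 ^ h by apply pow_R1_Rle; lra.
have H2r : 1 <= 2 ^ r by apply pow_R1_Rle; lra.
have E2L : 2 ^ L = 2 * 2 ^ h * 2 ^ r by rewrite Hr pow_add /=; ring.
have Hp : p = / (2 * 2 ^ r) by rewrite /p HL E2L; field; lra.
have Hh1 : 2 ^ (h + 1) = 2 * 2 ^ h by rewrite addn1 /=.
have Hth2 : th ^ 2 = eps / 2 ^ (h + 1).
  rewrite /th /theta /= Rmult_1_r. apply sqrt_sqrt.
  rewrite Hh1. apply Rmult_le_pos; [lra|]. apply Rlt_le, Rinv_0_lt_compat. lra.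
have Heps2 : eps <= 1/2.
  rewrite HL E2L. have -> : 1/2 = / 2 by field. apply Rinv_le_contravar; nra.
have Heps2b : 1/2 = /2 by field.
have Hth0 : 0 <= th by apply sqrt_pos.
split => //.
- rewrite Hp. apply Rinv_0_lt_compat; lra.
- rewrite Hp Heps2b. apply Rinv_le_contravar; lra.
- have : th ^ 2 <= 1/4.
    rewrite Hth2 Hh1. apply (Rmult_le_reg_r (2 * 2 ^ h)); first lra.
    have -> : eps / (2 * 2 ^ h) * (2 * 2 ^ h) = eps by field; lra.
    nra.
  nra.
- rewrite Hth2 Hh1 /p. field. lra.
Qed.

Hypothesis Hsn : (s <= n)%nat.

Lemma key (V : R) (HV : V < Pstar)
  (HV0 : forall sg, sup_lt (sample_values dom f A b eps h sg) Pstar ->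
          forall w, sample_values dom f A b eps h sg w -> w <= V) :
  exists v, V < v /\
  prob_perm (fun sigma => sup_lt (sample_values dom f A b eps h sigma) Pstar)
  <= exp (- (eps ^ 2 * v / (4 * gamma * Pstar))) + INR m * exp (- (eps ^ 2 / (6 * gamma))).
Proof.
have [v0 [[x [Hxd [Hxf Hv0e]]] Hv0]] : exists v0, offline_values dom f A b v0 /\ V < v0.
{ apply NNPP => Hno. have Hlub := proj2 HPstar.
  have : Pstar <= V.
    apply Hlub => w Hw. apply Rnot_lt_le => Hlt. apply Hno. by exists w.
  lra. }
pose x' := fun t => if Rlt_dec (f t (x t)) 0 then (fun _ : 'I_k => 0) else x t.
have Hx'd : forall t, dom t (x' t).
  move=> t; rewrite /x'; destruct (Rlt_dec (f t (x t)) 0) as [H|H]; [exact: G_dom0 (HG t) | exact: Hxd].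
have Hx'nn : forall t j, 0 <= x' t j.
  move=> t j; exact: G_nonneg (HG t) _ (Hx'd t) j.
have Hx'f : forall t, 0 <= f t (x' t) /\ f t (x t) <= f t (x' t).
  move=> t; rewrite /x'; destruct (Rlt_dec (f t (x t)) 0) as [H|H]; rewrite /= ?(G_f0 (HG t)); split; lra.
have Hx'mv : forall t i, 0 <= mv (A t) (x' t) i /\ mv (A t) (x' t) i <= mv (A t) (x t) i.
  move=> t i; split; first by apply mv_ge0 => // j; apply HA.
  rewrite /x'; destruct (Rlt_dec (f t (x t)) 0) as [H|H]; last by apply Rle_refl.
  rewrite mv_zero. apply mv_ge0 => j; [apply HA| exact: G_nonneg (HG t) _ (Hxd t) j].
pose v := \rsum_(t < n) f t (x' t).
have Hvv0 : v0 <= v by rewrite Hv0e; apply sumR_le => t _; case: (Hx'f t).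
have Hfeas : forall i, \rsum_(t < n) mv (A t) (x' t) i <= b i.
  move=> i; apply: Rle_trans (Hxf i). apply sumR_le => t _; by case: (Hx'mv t i).
have HvP : v <= Pstar.
  have Hub := proj1 HPstar. apply Hub. exists x'. split; [exact Hx'd | split; [exact Hfeas | reflexivity]].
have Hv : V < v by lra.
have [Hp0 Hp1 Hth0 Hth1 Hthp] := arith.
set p := 2 ^ h * eps in Hp0 Hp1 Hthp.
set th := theta eps h in Hth0 Hth1 Hthp.
have Hn' : 0 < INR n by apply lt_0_INR; apply/ltP.
have Hsp : INR s = p * INR n by rewrite Hs /p; ring.
pose c := fun t => f t (x' t) * / (gamma * Pstar).
have Hc : forall t, 0 <= c t <= 1.
  move=> t; rewrite /c; case: (Hx'f t) => H1 _; have H2 := Hgamma2 _ _ (Hx'd t).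
  have Hgp : 0 < gamma * Pstar by apply Rmult_lt_0_compat.
  split; first by apply Rmult_le_pos => //; apply Rlt_le, Rinv_0_lt_compat.
  apply (Rmult_le_reg_r (gamma * Pstar)) => //.
  rewrite Rmult_assoc Rinv_l; lra.
have HCc : Csum n c = v * / (gamma * Pstar) by rewrite /Csum /c -sumR_mulr.
pose d := fun i t => mv (A t) (x' t) i * / (gamma * b i).
have Hd : forall i t, 0 <= d i t <= 1.
  move=> i t; rewrite /d; case: (Hx'mv t i) => H1 _; case: (Hx'f t) => Hf _.
  have H2 := Hgamma1 _ _ (Hx'd t) Hf i.
  have Hbi := Hb i.
  have Hgb : 0 < gamma * b i by apply Rmult_lt_0_compat.
  split; first by apply Rmult_le_pos => //; apply Rlt_le, Rinv_0_lt_compat.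
  have -> : mv (A t) (x' t) i * / (gamma * b i) = (mv (A t) (x' t) i / b i) / gamma by field; lra.
  apply (Rmult_le_reg_r gamma) => //.
  have -> : mv (A t) (x' t) i / b i / gamma * gamma = mv (A t) (x' t) i / b i by field; lra.
  lra.
have HCd : forall i, Csum n (d i) / INR n * INR s <= p / gamma.
  move=> i; rewrite /Csum /d -sumR_mulr Hsp.
  have Hbi := Hb i.
  have : \rsum_(t < n) mv (A t) (x' t) i <= b i := Hfeas i.
  move: (\rsum_(t < n) mv (A t) (x' t) i) => S HS.
  have -> : S * / (gamma * b i) / INR n * (p * INR n) = (S / b i) * (p / gamma) by field; lra.
  have Hpg : 0 < p / gamma by apply Rdiv_lt_0_compat.
  have : S / b i <= 1.
    apply (Rmult_le_reg_r (b i)) => //. have -> : S / b i * b i = S by field; lra. lra.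
  nra.
pose F0 := fun sg : 'S_n => X n s c sg < (1 - th) * (Csum n c / INR n * INR s).
pose F := fun (i : 'I_m) (sg : 'S_n) => (1 + th) * (p / gamma) < X n s (d i) sg.
have Hsum_eq : forall (g : 'I_n -> R) (sg : 'S_n),
    \big[Rplus/R0]_(t < n | pbool (INR t < 2 ^ h * INR n * eps)) g t =
    \big[Rplus/R0]_(t : 'I_n | (t < s)%nat) g t.
  by move=> g sg; apply: eq_bigl => t; rewrite -Hs pbool_INR_lt.
have Hincl : forall sg, sup_lt (sample_values dom f A b eps h sg) Pstar -> F0 sg \/ exists i, F i sg.
  move=> sg Esg. apply NNPP => Hno.
  have HF0 : (1 - th) * (Csum n c / INR n * INR s) <= X n s c sg.
    apply Rnot_lt_le => H; apply Hno; by left.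
  have HF : forall i, X n s (d i) sg <= (1 + th) * (p / gamma).
    move=> i; apply Rnot_lt_le => H; apply Hno; right; by exists i.
  pose w := / (2 ^ h * eps * (1 - th)) *
    \big[Rplus/R0]_(t < n | pbool (INR t < 2 ^ h * INR n * eps)) f (sg t) (x' (sg t)).
  have Sw : sample_values dom f A b eps h sg w.
    exists (fun t => x' (sg t)). split; [|split].
    - move=> t _; apply Hx'd.
    - move=> i. rewrite (Hsum_eq (fun t => mv (A (sg t)) (x' (sg t)) i) sg).
      have HX : X n s (d i) sg = \big[Rplus/R0]_(t : 'I_n | (t < s)%nat) mv (A (sg t)) (x' (sg t)) i * / (gamma * b i).
        by rewrite /X /d sumR_mulr.
      have := HF i. rewrite HX.
      move: (\big[Rplus/R0]_(t : 'I_n | (t < s)%nat) mv (A (sg t)) (x' (sg t)) i) => S HS.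
      have Hbi := Hb i.
      rewrite -/th -/p.
      have Hq : 0 < p * (1 + th) by apply Rmult_lt_0_compat; lra.
      apply (Rmult_le_reg_l (p * (1 + th))) => //.
      rewrite -Rmult_assoc Rinv_r; last by lra.
      have : S <= (1 + th) * (p / gamma) * (gamma * b i).
        have Hgb : 0 < gamma * b i by apply Rmult_lt_0_compat.
        have -> : S = S * / (gamma * b i) * (gamma * b i) by field; lra.
        by apply Rmult_le_compat_r; lra.
      have -> : (1 + th) * (p / gamma) * (gamma * b i) = p * (1 + th) * b i by field; lra.
      lra.
    - by [].
  have Hw := HV0 sg Esg w Sw.
  have : v <= w.
    rewrite /w (Hsum_eq (fun t => f (sg t) (x' (sg t))) sg).
    have HX : X n s c sg = \big[Rplus/R0]_(t : 'I_n | (t < s)%nat) f (sg t) (x' (sg t)) * / (gamma * Pstar).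
      by rewrite /X /c sumR_mulr.
    move: HF0. rewrite HX HCc Hsp.
    move: (\big[Rplus/R0]_(t : 'I_n | (t < s)%nat) f (sg t) (x' (sg t))) => S HS.
    rewrite -/th -/p.
    have Hgp : 0 < gamma * Pstar by apply Rmult_lt_0_compat.
    have H1 : 0 < 1 - th by lra.
    have Hq : 0 < p * (1 - th) by apply Rmult_lt_0_compat.
    have -> : / (p * (1 - th)) * S = (S * / (gamma * Pstar)) * (gamma * Pstar) / (p * (1 - th)) by field; lra.
    have -> : v = (1 - th) * (v * / (gamma * Pstar) / INR n * (p * INR n)) * (gamma * Pstar) / (p * (1 - th)) by field; lra.
    apply Rmult_le_compat_r; first by apply Rlt_le, Rinv_0_lt_compat.
    apply Rmult_le_compat_r; lra.
  lra.
exists v; split => //.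
have HU := @union_count m _ _ F0 F Hincl.
have HL0 := @lower_tail n Hn s Hsn c Hc th Hth0.
have HU0 : forall i, INR #|[set sg | pbool (F i sg)]| <= exp (- (th ^ 2 * (p / gamma) / 3)) * Zs n.
  move=> i. apply: (@upper_tail n Hn s Hsn (d i) (Hd i) th (p / gamma)); [lra | apply HCd].
have HZ : 0 < Zs n.
  rewrite /Zs -card_all. apply lt_0_INR. apply/ltP. apply/card_gt0P. exists 1%g. by rewrite inE.
rewrite /prob_perm card_all -/(Zs n).
apply (Rmult_le_reg_r (Zs n)) => //.
rewrite /Rdiv Rmult_assoc Rinv_l; last by lra.
rewrite Rmult_1_r.
apply: (Rle_trans _ _ _ HU).
have E0 : th ^ 2 * (Csum n c / INR n * INR s) / 2 = eps ^ 2 * v / (4 * gamma * Pstar).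
  rewrite HCc Hsp.
  have -> : th ^ 2 * (v * / (gamma * Pstar) / INR n * (p * INR n)) / 2 = (th ^ 2 * p) * v / (2 * gamma * Pstar) by field; lra.
  rewrite Hthp. field; lra.
have E1 : th ^ 2 * (p / gamma) / 3 = eps ^ 2 / (6 * gamma).
  have -> : th ^ 2 * (p / gamma) / 3 = (th ^ 2 * p) / (3 * gamma) by field; lra.
  rewrite Hthp. field; lra.
rewrite E0 in HL0. rewrite E1 in HU0.
rewrite Rmult_plus_distr_r.
apply Rplus_le_compat; first exact HL0.
apply: Rle_trans; first by apply: sumR_le => i _; apply: HU0 i.
rewrite sumR_const_ord. apply Req_le; rewrite /Rdiv; ring.
Qed.

End MainSec.

Lemma exp_le_inv1m y : 0 <= y < 1 -> exp y <= / (1 - y).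
Proof.
move=> Hy.
have H1 := exp_ineq1_le (- y).
have H2 : exp y * exp (- y) = 1 by rewrite -exp_plus Rplus_opp_r exp_0.
have H3 := exp_pos y.
apply (Rmult_le_reg_r (1 - y)); first lra.
rewrite Rinv_l; last lra.
nra.
Qed.

Theorem mainTheorem4
  (m k n : nat) (Hm : (0 < m)%nat) (Hk : (0 < k)%nat) (Hn : (0 < n)%nat)
  (b : 'I_m -> R) (Hb : forall i, 0 < b i)
  (dom : 'I_n -> Vec k -> Prop) (f : 'I_n -> Vec k -> R)
  (HG : forall t, in_G (dom t) (f t))
  (A : 'I_n -> Mat m k) (HA : forall t i j, 0 <= A t i j)
  (Pstar : R) (HPstar : is_lub (offline_values dom f A b) Pstar)
  (HPpos : 0 < Pstar)
  (gamma : R) (Hgamma : 0 < gamma)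
  (Hgamma1 : forall t x, dom t x -> 0 <= f t x ->
               forall i, mv (A t) x i / b i <= gamma)
  (Hgamma2 : forall t x, dom t x -> f t x <= gamma * Pstar)
  (eps : R) (Heps : 0 < eps < 1)
  (L : nat) (HL : eps = / 2 ^ L)
  (Hneps : exists N : nat, INR n * eps = INR N)
  (h : nat) (Hh : (h < L)%nat) :
  prob_perm (fun sigma => sup_lt (sample_values dom f A b eps h sigma) Pstar)
  <= exp (- (eps ^ 2 / (4 * gamma))) + INR m * exp (- (eps ^ 2 / (6 * gamma))).
Proof.
case: Hneps => N HN.
pose s := (Nat.pow 2 h * N)%coq_nat.
have Hs : INR s = 2 ^ h * INR n * eps.
  rewrite /s mult_INR pow_INR -HN.
  have -> : INR 2 = 2 by rewrite /=; ring.
  ring.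
have [Hp0 Hp1 _ _ _] := @arith eps Heps L h HL Hh.
have Hn' : 0 < INR n by apply lt_0_INR; apply/ltP.
have Hsn : (s <= n)%nat.
  apply/leP. apply INR_le. rewrite Hs.
  have : 2 ^ h * eps * INR n <= 1 * INR n by apply Rmult_le_compat_r; lra.
  lra.
have [V0 [HV0P HV0]] := @fin_max _ (fun sg => sup_lt (sample_values dom f A b eps h sg) Pstar)
   (fun sg => sample_values dom f A b eps h sg) Pstar (fun sg H => H).
set Q := prob_perm _.
set K := INR m * exp (- (eps ^ 2 / (6 * gamma))).
set a := eps ^ 2 / (4 * gamma * Pstar).
have Ha : 0 < a.
  rewrite /a. apply Rdiv_lt_0_compat; first by apply pow_lt; lra.
  apply Rmult_lt_0_compat => //; lra.
have Hbound : forall V, V0 <= V < Pstar -> Q - K <= exp (- (a * V)).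
  move=> V [HV1 HV2].
  have HV0' : forall sg, sup_lt (sample_values dom f A b eps h sg) Pstar ->
          forall w, sample_values dom f A b eps h sg w -> w <= V.
    move=> sg Es w Sw. have := HV0 sg Es w Sw. lra.
  have [v [Hv HQ]] := @key m k n Hn b Hb dom f HG A HA Pstar HPstar HPpos gamma Hgamma Hgamma1 Hgamma2 eps Heps L h HL Hh s Hs Hsn V HV2 HV0'.
  have : exp (- (eps ^ 2 * v / (4 * gamma * Pstar))) <= exp (- (a * V)).
    apply exp_le_mono. rewrite /a.
    have -> : eps ^ 2 * v / (4 * gamma * Pstar) = eps ^ 2 / (4 * gamma * Pstar) * v by field; lra.
    have : eps ^ 2 / (4 * gamma * Pstar) * V <= eps ^ 2 / (4 * gamma * Pstar) * v.
      apply Rmult_le_compat_l; [apply Rlt_le, Ha | lra].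
    rewrite /a in Ha. lra.
  move=> Hle. rewrite /Q /K. rewrite /K in HQ. lra.
have HaP : a * Pstar = eps ^ 2 / (4 * gamma) by rewrite /a; field; lra.
rewrite -HaP.
set E := exp (- (a * Pstar)).
have HE : 0 < E by apply exp_pos.
apply Rnot_lt_le => Hcon.
set rho := (Q - K) / E.
have Hrho : 1 < rho.
  rewrite /rho. apply (Rmult_lt_reg_r E) => //.
  have -> : (Q - K) / E * E = Q - K by field; lra.
  lra.
set y := Rmin ((1 - / rho) / 2) (a * (Pstar - V0)).
have Hirho : 0 < / rho < 1.
  split; first by apply Rinv_0_lt_compat; lra.
  rewrite -Rinv_1. apply Rinv_lt_contravar; lra.
have Hy0 : 0 < y.
  rewrite /y. apply Rmin_pos; first lra. apply Rmult_lt_0_compat; lra.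
have Hy1 : y <= (1 - / rho) / 2 by apply Rmin_l.
have Hy2 : y <= a * (Pstar - V0) by apply Rmin_r.
pose V := Pstar - y / a.
have HV : V0 <= V < Pstar.
  rewrite /V. split.
  - have : y / a <= Pstar - V0.
      apply (Rmult_le_reg_r a) => //. have -> : y / a * a = y by field; lra. lra.
    lra.
  - have : 0 < y / a by apply Rdiv_lt_0_compat. lra.
have HB := Hbound V HV.
have Hexp : exp (- (a * V)) = E * exp y.
  rewrite /E -exp_plus. congr exp. rewrite /V. field. lra.
have Hy3 : y < 1 by lra.
have Hey := exp_le_inv1m y (conj (Rlt_le _ _ Hy0) Hy3).
have : Q - K <= E * / (1 - y).
  rewrite Hexp in HB. apply: Rle_trans HB _. apply Rmult_le_compat_l; lra.
have Hinv : / (1 - y) < rho.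
  have H1y : 0 < 1 - y by lra.
  apply (Rmult_lt_reg_r (1 - y)) => //.
  rewrite Rinv_l; last lra.
  have : / rho * rho = 1 by field; lra.
  nra.
have : E * / (1 - y) < E * rho by apply Rmult_lt_compat_l.
have : E * rho = Q - K by rewrite /rho; field; lra.
lra.
Qed.
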